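(* Let $\mathcal F,\mathcal F_t,\mathcal F_{st}$ be exact categories with twist functors $X\mapsto X(1)$, let $\eta_t\colon\mathcal F\to\mathcal F_t$ and $\eta_{st}\colon\mathcal F\to\mathcal F_{st}$ be exact functors commuting with the twists, and $\sigma\colon\eta_{st}\to\eta_{st}(1)$ a natural transformation commuting with the twists. Assume $\eta_t$ satisfies (ii$'$) and (ii$''$), and (III): a morphism $f\colon X\to Y$ of $\mathcal F$ satisfies $\eta_t(f)=0$ iff $\sigma_Y\circ\eta_{st}(f)=0$. Then for all $X,Y\in\mathcal F$ there are maps $s_0\colon\operatorname{Hom}_{\mathcal F_t}(\eta_tX,\eta_t(Y)(-1))\to\operatorname{Hom}_{\mathcal F_{st}}(\eta_{st}X,\eta_{st}Y)$ such that for every $p$, every admissible epimorphism $q\colon X'\to X$ and every $h\colon X'\to Y(-1)$ in $\mathcal F$ with $\eta_t(h)=p\circ\eta_t(q)$, one has $s_0(p)\circ\eta_{st}(q)=\sigma_{Y(-1)}\circ\eta_{st}(h)$; and these maps satisfy: (a) $s_0(\mathrm{id}_{\eta_t(E)})=\sigma_E\in\operatorname{Hom}_{\mathcal F_{st}}(\eta_{st}E,\eta_{st}(E)(1))$ for every $E\in\mathcal F$; (b) $s_0(\eta_t(g(-1))\,p\,\eta_t(h))=\eta_{st}(g)\,s_0(p)\,\eta_{st}(h)$ for all $h\colon U\to X$, $g\colon Y\to V$ in $\mathcal F$ and $p\colon\eta_tX\to\eta_t(Y)(-1)$; (c) $s_0$ is injective for all $X,Y$; (d) a morphism $g\colon\eta_{st}X\to\eta_{st}Y$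 lies in the image of $s_0$ iff there is an admissible epimorphism $X'\to X$ in $\mathcal F$ with $\eta_{st}(X')\to\eta_{st}(X)\xrightarrow{g}\eta_{st}(Y)$ divisible by $\sigma$, iff there is an admissible monomorphism $Y\to Y'$ in $\mathcal F$ with $\eta_{st}(X)\xrightarrow{g}\eta_{st}(Y)\to\eta_{st}(Y')$ divisible by $\sigma$.
   Context: Exact categories in Quillen's sense; a twist functor is an exact autoequivalence; functors commute with twists via fixed isomorphisms $\eta(X(1))\cong\eta(X)(1)$; $\sigma$ commutes with the twists if $\sigma_{X(1)}=\sigma_X(1)$. A morphism $\eta_{st}(A)\to\eta_{st}(B)$ is divisible by $\sigma$ if it equals $\sigma_{B(-1)}\circ\eta_{st}(h)$ for some $h\colon A\to B(-1)$ in $\mathcal F$. For an exact functor $\eta$: (ii$'$) for any $X,Y$ and any $g\colon\eta X\to\eta Y$ there exist an admissible epimorphism $p\colon X'\to X$ and $h\colon X'\to Y$ with $g\eta(p)=\eta(h)$; (ii$''$) for any $g\colon\eta X\to\eta Y$ there exist an admissible monomorphism $j\colon Y\to Y'$ and $h\colon X\to Y'$ with $\eta(j)g=\eta(h)$. *)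

(* Defs.v *)
From HB Require Import structures.
From mathcomp Require Import all_boot all_algebra.
Set Implicit Arguments. Unset Strict Implicit. Unset Printing Implicit Defensive.
Import GRing.Theory.
Local Open Scope ring_scope.

Record PreAddCat := {
  ob :> Type;
  Mor : ob -> ob -> zmodType;
  compo : forall X Y Z : ob, Mor Y Z -> Mor X Y -> Mor X Z;
  idm : forall X : ob, Mor X X;
  compA : forall X Y Z W (f : Mor Z W) (g : Mor Y Z) (h : Mor X Y),
      compo f (compo g h) = compo (compo f g) h;
  comp1m : forall X Y (f : Mor X Y), compo (idm Y) f = f;
  compm1 : forall X Y (f : Mor X Y), compo f (idm X) = f;
  compDl : forall X Y Z (f g : Mor Y Z) (h : Mor X Y),
      compo (f + g) h = compo f h + compo g h;
  compDr : forall X Y Z (f : Mor Y Z) (g h : Mor X Y),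
      compo f (g + h) = compo f g + compo f h
}.
Arguments Mor {p}.
Arguments compo {p X Y Z}.
Arguments idm {p}.

Notation "g \oc f" := (compo g f) (at level 40, left associativity).

Section Basic.
Variable C : PreAddCat.

Definition is_iso (X Y : C) (f : Mor X Y) : Prop :=
  exists g : Mor Y X, g \oc f = idm X /\ f \oc g = idm Y.

(* additivity: a zero object and binary biproducts *)
Definition additive_cat : Prop :=
  (exists Z : C, idm Z = 0) /\
  (forall A B : C, exists (P : C) (i1 : Mor A P) (i2 : Mor B P)
                          (p1 : Mor P A) (p2 : Mor P B),
      [/\ p1 \oc i1 = idm A, p2 \oc i2 = idm B, p1 \oc i2 = 0, p2 \oc i1 = 0
        & i1 \oc p1 + i2 \oc p2 = idm P]).

Definition is_kernel (A B D : C) (i : Mor A B) (p : Mor B D) : Prop :=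
  p \oc i = 0 /\
  forall (W : C) (f : Mor W B), p \oc f = 0 -> exists! g : Mor W A, i \oc g = f.

Definition is_cokernel (A B D : C) (p : Mor B D) (i : Mor A B) : Prop :=
  p \oc i = 0 /\
  forall (W : C) (f : Mor B W), f \oc i = 0 -> exists! g : Mor D W, g \oc p = f.

Definition is_pullback (B D C' B' : C) (p : Mor B D) (f : Mor C' D)
    (p' : Mor B' C') (f' : Mor B' B) : Prop :=
  p \oc f' = f \oc p' /\
  forall (W : C) (a : Mor W B) (b : Mor W C'), p \oc a = f \oc b ->
    exists! k : Mor W B', f' \oc k = a /\ p' \oc k = b.

Definition is_pushout (A B A' B' : C) (i : Mor A B) (f : Mor A A')
    (i' : Mor A' B') (f' : Mor B B') : Prop :=
  f' \oc i = i' \oc f /\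
  forall (W : C) (a : Mor B W) (b : Mor A' W), a \oc i = b \oc f ->
    exists! k : Mor B' W, k \oc f' = a /\ k \oc i' = b.

Definition conflation_class := forall A B D : C, Mor A B -> Mor B D -> Prop.

Variable E : conflation_class.

Definition adm_epi (B D : C) (p : Mor B D) : Prop :=
  exists (A : C) (i : Mor A B), E i p.
Definition adm_mono (A B : C) (i : Mor A B) : Prop :=
  exists (D : C) (p : Mor B D), E i p.

(* Quillen's axioms for an exact structure (as in Buehler, Exact categories) *)
Definition exact_structure : Prop :=
  [/\
      (forall A B D (i : Mor A B) (p : Mor B D), E i p ->
         is_kernel i p /\ is_cokernel p i),
      (forall A B D A' B' D' (i : Mor A B) (p : Mor B D)
              (i' : Mor A' B') (p' : Mor B' D')
              (a : Mor A' A) (b : Mor B' B) (d : Mor D' D),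
         E i p -> is_iso a -> is_iso b -> is_iso d ->
         i \oc a = b \oc i' -> p \oc b = d \oc p' -> E i' p'),
      (forall X : C, adm_mono (idm X) /\ adm_epi (idm X)),
      (forall X Y Z (f : Mor X Y) (g : Mor Y Z),
         (adm_mono f -> adm_mono g -> adm_mono (g \oc f)) /\
         (adm_epi f -> adm_epi g -> adm_epi (g \oc f))) &
      (forall A B A' (i : Mor A B) (f : Mor A A'), adm_mono i ->
         exists (B' : C) (i' : Mor A' B') (f' : Mor B B'),
           is_pushout i f i' f' /\ adm_mono i') /\
      (forall B D C' (p : Mor B D) (f : Mor C' D), adm_epi p ->
         exists (B' : C) (p' : Mor B' C') (f' : Mor B' B),
           is_pullback p f p' f' /\ adm_epi p') ].

End Basic.

Record ExactCat := {
  ecat :> PreAddCat;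
  conf : conflation_class ecat;
  ecat_additive : additive_cat ecat;
  ecat_exact : exact_structure conf
}.

Definition admEpi (C : ExactCat) (B D : C) (p : Mor B D) := adm_epi (@conf C) p.
Definition admMono (C : ExactCat) (A B : C) (i : Mor A B) := adm_mono (@conf C) i.

Record AddFunctor (C D : PreAddCat) := {
  fob :> C -> D;
  fmap : forall X Y : C, Mor X Y -> Mor (fob X) (fob Y);
  fmapD : forall X Y (f g : Mor X Y), fmap (f + g) = fmap f + fmap g;
  fmap_comp : forall X Y Z (g : Mor Y Z) (f : Mor X Y),
      fmap (g \oc f) = fmap g \oc fmap f;
  fmap_id : forall X, fmap (idm X) = idm (fob X)
}.
Arguments fmap {C D} _ {X Y}.

Definition exact_functor (C D : ExactCat) (F : AddFunctor C D) : Prop :=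
  forall (A B E : C) (i : Mor A B) (p : Mor B E),
    conf i p -> conf (fmap F i) (fmap F p).

(* ---------- Twist functors: exact autoequivalences ----------
   tw X = X(1), utw X = X(-1); unit : X ~= X(1)(-1), counit : X(-1)(1) ~= X,
   fixed natural isomorphisms forming an adjoint equivalence. *)
Record Twist (C : ExactCat) := {
  tw : AddFunctor C C;
  utw : AddFunctor C C;
  tw_exact : exact_functor tw;
  utw_exact : exact_functor utw;
  tunit : forall X : C, Mor X (utw (tw X));
  tunit_inv : forall X : C, Mor (utw (tw X)) X;
  tunitK : forall X, tunit_inv X \oc tunit X = idm X;
  tunitKV : forall X, tunit X \oc tunit_inv X = idm (utw (tw X));
  tunit_nat : forall X Y (f : Mor X Y),
      tunit Y \oc f = fmap utw (fmap tw f) \oc tunit X;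
  tcounit : forall X : C, Mor (tw (utw X)) X;
  tcounit_inv : forall X : C, Mor X (tw (utw X));
  tcounitK : forall X, tcounit_inv X \oc tcounit X = idm (tw (utw X));
  tcounitKV : forall X, tcounit X \oc tcounit_inv X = idm X;
  tcounit_nat : forall X Y (f : Mor X Y),
      tcounit Y \oc fmap tw (fmap utw f) = f \oc tcounit X;
  ttriangle : forall X, tcounit (tw X) \oc fmap tw (tunit X) = idm (tw X)
}.
Arguments tw {C}.
Arguments utw {C}.
Arguments tunit {C}.
Arguments tcounit {C}.

Record TwFunctor (C D : ExactCat) (TC : Twist C) (TD : Twist D) := {
  tfun :> AddFunctor C D;
  tfun_exact : exact_functor tfun;
  cm : forall X : C, Mor (tfun (tw TC X)) (tw TD (tfun X));
  cm_inv : forall X : C, Mor (tw TD (tfun X)) (tfun (tw TC X));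
  cmK : forall X, cm_inv X \oc cm X = idm _;
  cmKV : forall X, cm X \oc cm_inv X = idm _;
  cm_nat : forall X Y (f : Mor X Y),
      cm Y \oc fmap tfun (fmap (tw TC) f) = fmap (tw TD) (fmap tfun f) \oc cm X
}.
Arguments cm {C D TC TD}.
Arguments cm_inv {C D TC TD}.

Record TwNat (C D : ExactCat) (TC : Twist C) (TD : Twist D)
    (F : TwFunctor TC TD) := {
  sigm_at : forall X : C, Mor (F X) (tw TD (F X));
  sig_nat : forall X Y (f : Mor X Y),
      sigm_at Y \oc fmap F f = fmap (tw TD) (fmap F f) \oc sigm_at X;
  (* sigma_{X(1)} = sigma_X(1), transported along cm *)
  sig_tw : forall X : C,
      fmap (tw TD) (cm F X) \oc sigm_at (tw TC X) = fmap (tw TD) (sigm_at X) \oc cm F X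
}.
Arguments sigm_at {C D TC TD F}.

Section Derived.
Variables (C D : ExactCat) (TC : Twist C) (TD : Twist D) (F : TwFunctor TC TD).

(* sigma_{Y(-1)} viewed as a map F(Y(-1)) -> F(Y(-1))(1) ~= F(Y(-1)(1)) ~= F(Y) *)
Definition sigm (s : TwNat F) (Y : C) : Mor (F (utw TC Y)) (F Y) :=
  fmap F (tcounit TC Y) \oc cm_inv F (utw TC Y) \oc sigm_at s (utw TC Y).

(* canonical iso F(Y(-1)) ~= F(Y)(-1) *)
Definition iotw (Y : C) : Mor (F (utw TC Y)) (utw TD (F Y)) :=
  fmap (utw TD) (fmap F (tcounit TC Y) \oc cm_inv F (utw TC Y))
  \oc tunit TD (F (utw TC Y)).

(* canonical iso F(E) ~= F(E(1))(-1), the image of id_{F E} *)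
Definition idtw (E : C) : Mor (F E) (utw TD (F (tw TC E))) :=
  fmap (utw TD) (cm_inv F E) \oc tunit TD (F E).

Definition divisible (s : TwNat F) (A B : C) (k : Mor (F A) (F B)) : Prop :=
  exists h : Mor A (utw TC B), k = sigm s B \oc fmap F h.

Definition cond_ii' : Prop :=
  forall (X Y : C) (g : Mor (F X) (F Y)),
    exists (X' : C) (p : Mor X' X) (h : Mor X' Y),
      admEpi p /\ g \oc fmap F p = fmap F h.
Definition cond_ii'' : Prop :=
  forall (X Y : C) (g : Mor (F X) (F Y)),
    exists (Y' : C) (j : Mor Y Y') (h : Mor X Y'),
      admMono j /\ fmap F j \oc g = fmap F h.
End Derived.

(* Main.v *)
Require Import Defs.
From HB Require Import structures.
From mathcomp Require Import all_boot all_algebra.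
From Stdlib Require Import ClassicalEpsilon.
Set Implicit Arguments. Unset Strict Implicit. Unset Printing Implicit Defensive.
Import GRing.Theory.
Local Open Scope ring_scope.

Section Cat.
Variable C : PreAddCat.
Lemma cA (X Y Z W : C) (f : Mor Z W) (g : Mor Y Z) (h : Mor X Y) :
  f \oc (g \oc h) = f \oc g \oc h.
Proof. exact: Defs.compA. Qed.
Lemma c1m (X Y : C) (f : Mor X Y) : idm Y \oc f = f. Proof. exact: comp1m. Qed.
Lemma cm1 (X Y : C) (f : Mor X Y) : f \oc idm X = f. Proof. exact: compm1. Qed.
Lemma c0l (X Y Z : C) (h : Mor X Y) : (0 : Mor Y Z) \oc h = 0.
Proof. have H := compDl (0 : Mor Y Z) 0 h; rewrite addr0 in H.
by apply: (addrI ((0 : Mor Y Z) \oc h)); rewrite addr0 -H. Qed.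
Lemma c0r (X Y Z : C) (f : Mor Y Z) : f \oc (0 : Mor X Y) = 0.
Proof. have H := compDr f (0 : Mor X Y) 0; rewrite addr0 in H.
by apply: (addrI (f \oc (0 : Mor X Y))); rewrite addr0 -H. Qed.
Lemma cNl (X Y Z : C) (f : Mor Y Z) (h : Mor X Y) : (- f) \oc h = - (f \oc h).
Proof. apply/eqP; rewrite -subr_eq0 opprK -compDl addNr c0l //. Qed.
Lemma cNr (X Y Z : C) (f : Mor Y Z) (h : Mor X Y) : f \oc (- h) = - (f \oc h).
Proof. apply/eqP; rewrite -subr_eq0 opprK -compDr addNr c0r //. Qed.
Lemma cBl (X Y Z : C) (f g : Mor Y Z) (h : Mor X Y) : (f - g) \oc h = f \oc h - g \oc h.
Proof. by rewrite compDl cNl. Qed.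
Lemma cBr (X Y Z : C) (f : Mor Y Z) (g h : Mor X Y) : f \oc (g - h) = f \oc g - f \oc h.
Proof. by rewrite compDr cNr. Qed.
End Cat.

Section Fun.
Variables (C D : PreAddCat) (F : AddFunctor C D).
Lemma fm0 (X Y : C) : fmap F (0 : Mor X Y) = 0.
Proof. have H := fmapD F (0 : Mor X Y) 0; rewrite addr0 in H.
by apply: (addrI (fmap F (0 : Mor X Y))); rewrite addr0 -H. Qed.
Lemma fmB (X Y : C) (f g : Mor X Y) : fmap F (f - g) = fmap F f - fmap F g.
Proof. apply/eqP; rewrite eq_sym subr_eq -fmapD subrK //. Qed.
Lemma fmC (X Y Z : C) (g : Mor Y Z) (f : Mor X Y) : fmap F (g \oc f) = fmap F g \oc fmap F f.
Proof. exact: fmap_comp. Qed.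
Lemma fm1 (X : C) : fmap F (idm X) = idm (F X).
Proof. exact: fmap_id. Qed.
End Fun.
Section Ex.
Variable C : ExactCat.
Implicit Types A B D : C.

Lemma conf_kc A B D (i : Mor A B) (p : Mor B D) : conf i p -> is_kernel i p /\ is_cokernel p i.
Proof. by case: (ecat_exact C) => H _ _ _ _; apply: H. Qed.

Lemma conf_zero A B D (i : Mor A B) (p : Mor B D) : conf i p -> p \oc i = 0.
Proof. by case/conf_kc => [[]]. Qed.

Lemma conf_epi A B D (i : Mor A B) (p : Mor B D) W (f g : Mor D W) :
  conf i p -> f \oc p = g \oc p -> f = g.
Proof.
move=> /conf_kc [_ [_ H]] e.
have [k [_ U]] := H W 0 (c0l _ _).
have E1 := U (f - g); have E2 := U 0.
apply/eqP; rewrite -subr_eq0; apply/eqP.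
rewrite -[f - g]E1 ?E2 // ?c0l // cBl e subrr //.
Qed.

Lemma conf_mono A B D (i : Mor A B) (p : Mor B D) W (f g : Mor W A) :
  conf i p -> i \oc f = i \oc g -> f = g.
Proof.
move=> /conf_kc [[_ H] _] e.
have [k [_ U]] := H W 0 (c0r _ _).
have E1 := U (f - g); have E2 := U 0.
apply/eqP; rewrite -subr_eq0; apply/eqP.
rewrite -[f - g]E1 ?E2 // ?c0r // cBr e subrr //.
Qed.

Lemma coker_fact A B D (i : Mor A B) (p : Mor B D) W (f : Mor B W) :
  conf i p -> f \oc i = 0 -> exists g, g \oc p = f.
Proof. move=> /conf_kc [_ [_ H]] /H [g [Hg _]]; by exists g. Qed.

Lemma ker_fact A B D (i : Mor A B) (p : Mor B D) W (f : Mor W B) :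
  conf i p -> p \oc f = 0 -> exists g, i \oc g = f.
Proof. move=> /conf_kc [[_ H] _] /H [g [Hg _]]; by exists g. Qed.

Lemma epi_cancel B D (p : Mor B D) W (f g : Mor D W) :
  admEpi p -> f \oc p = g \oc p -> f = g.
Proof. by case=> A [i Hc]; apply: conf_epi Hc. Qed.

Lemma mono_cancel A B (i : Mor A B) W (f g : Mor W A) :
  admMono i -> i \oc f = i \oc g -> f = g.
Proof. by case=> D [p Hc]; apply: conf_mono Hc. Qed.

Lemma admEpi_id A : admEpi (idm A).
Proof. by case: (ecat_exact C) => _ _ H _ _; case: (H A). Qed.

Lemma admEpi_comp A B D (f : Mor A B) (g : Mor B D) :
  admEpi f -> admEpi g -> admEpi (g \oc f).
Proof. by case: (ecat_exact C) => _ _ _ H _; case: (H _ _ _ f g). Qed.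

Lemma admMono_comp A B D (f : Mor A B) (g : Mor B D) :
  admMono f -> admMono g -> admMono (g \oc f).
Proof. by case: (ecat_exact C) => _ _ _ H _; case: (H _ _ _ f g). Qed.

Lemma admMono_iso A B (a : Mor A B) : is_iso a -> admMono a.
Proof.
move=> Ha; case: (ecat_exact C) => _ Hiso H _ _.
case: (H B) => [[D [p0 Hc]] _]; exists D, p0.
apply: (Hiso _ _ _ _ _ _ (idm B) p0 a p0 a (idm B) (idm D) Hc Ha).
- by exists (idm B); rewrite c1m.
- by exists (idm D); rewrite c1m.
- by rewrite c1m.
- by rewrite cm1 c1m.
Qed.

Lemma pullback_epi B D C' (p : Mor B D) (f : Mor C' D) : admEpi p ->
  exists (B' : C) (p' : Mor B' C') (f' : Mor B' B),
    p \oc f' = f \oc p' /\ admEpi p'.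
Proof.
case: (ecat_exact C) => _ _ _ _ [_ H] /(H _ _ _ p f) [B' [p' [f' [[e _] ?]]]].
by exists B', p', f'.
Qed.
End Ex.

Lemma exact_epi (C D : ExactCat) (F : AddFunctor C D) (HF : exact_functor F)
  (B E : C) (p : Mor B E) : admEpi p -> admEpi (fmap F p).
Proof. by case=> A [i Hc]; exists (F A), (fmap F i); apply: HF. Qed.
Lemma exact_mono (C D : ExactCat) (F : AddFunctor C D) (HF : exact_functor F)
  (A B : C) (i : Mor A B) : admMono i -> admMono (fmap F i).
Proof. by case=> E [p Hc]; exists (F E), (fmap F p); apply: HF. Qed.
Section Tw.
Variables (C : ExactCat) (T : Twist C).
Local Notation G := (utw T).
Local Notation Fw := (tw T).

Lemma tri2 (Y : C) : fmap G (tcounit T Y) \oc tunit T (G Y) = idm (G Y).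
Proof.
set th := fmap G (tcounit T Y) \oc tunit T (G Y).
have L : (tunit_inv T (G Y) \oc fmap G (tcounit_inv T Y)) \oc th = idm _.
  rewrite /th cA -[_ \oc fmap G (tcounit_inv T Y) \oc _]cA -fmC tcounitK fm1 cm1.
  exact: tunitK.
have S1 := tunit_nat T (fmap G (tcounit T Y)).
have S2 := tunit_nat T (tunit T (G Y)).
have S3 := tcounit_nat T (tcounit T Y).
have S4 := ttriangle T (G Y).
have E1 : fmap G (tcounit T Y) \oc fmap G (fmap Fw (fmap G (tcounit T Y)))
          = fmap G (tcounit T Y) \oc fmap G (tcounit T (Fw (G Y))).
  by rewrite -!fmC S3.
have TT : th \oc th = th.
  rewrite /th -!cA [tunit T (G Y) \oc (_ \oc _)]cA S1 -cA S2 !cA E1.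
  rewrite -[X in X \oc tunit T (G Y)]cA -fmC S4 fm1 cm1 //.
by rewrite -L -TT cA L c1m.
Qed.

Lemma tunit_utw (Y : C) : tunit T (G Y) = fmap G (tcounit_inv T Y).
Proof.
rewrite -[tunit T (G Y)]c1m -(fm1 G) -tcounitK fmC -cA tri2 cm1 //.
Qed.
End Tw.
Section TF.
Variables (C D : ExactCat) (TC : Twist C) (TD : Twist D) (F : TwFunctor TC TD).

Lemma cm_inv_nat (X Y : C) (f : Mor X Y) :
  cm_inv F Y \oc fmap (tw TD) (fmap F f) = fmap F (fmap (tw TC) f) \oc cm_inv F X.
Proof.
rewrite -[LHS]cm1 -(cmKV F X) cA -[cm_inv F Y \oc _ \oc _]cA -cm_nat.
by rewrite cA cmK c1m.
Qed.

Lemma iotw_nat (Y V : C) (g : Mor Y V) :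
  iotw F V \oc fmap F (fmap (utw TC) g) = fmap (utw TD) (fmap F g) \oc iotw F Y.
Proof.
rewrite /iotw -cA tunit_nat cA -fmC -cA cm_inv_nat cA -fmC tcounit_nat.
by rewrite (fmC F g) -(cA (fmap F g)) (fmC (utw TD)) cA.
Qed.

Lemma iotw_iso (Y : C) : exists j,
  j \oc iotw F Y = idm _ /\ iotw F Y \oc j = idm _.
Proof.
set a := fmap F (tcounit TC Y) \oc cm_inv F (utw TC Y).
set b := cm F (utw TC Y) \oc fmap F (tcounit_inv TC Y).
have ba : b \oc a = idm _.
  by rewrite /a /b cA -[_ \oc fmap F _ \oc fmap F _]cA -fmC tcounitK fm1 cm1 cmKV.
have ab : a \oc b = idm _.
  by rewrite /a /b cA -[_ \oc cm_inv F _ \oc cm F _]cA cmK cm1 -fmC tcounitKV fm1.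
exists (tunit_inv TD (F (utw TC Y)) \oc fmap (utw TD) b); split; rewrite /iotw -/a.
  by rewrite cA -[_ \oc fmap (utw TD) b \oc _]cA -fmC ba fm1 cm1 tunitK.
by rewrite cA -[_ \oc tunit TD _ \oc _]cA tunitKV cm1 -fmC ab fm1.
Qed.

Lemma idtw_eq (E : C) : iotw F (tw TC E) \oc fmap F (tunit TC E) = idtw F E.
Proof.
rewrite /iotw /idtw -cA tunit_nat cA -fmC -cA cm_inv_nat cA -fmC ttriangle fm1 c1m //.
Qed.

Variable s : TwNat F.

Lemma sigm_nat (Y V : C) (g : Mor Y V) :
  sigm s V \oc fmap F (fmap (utw TC) g) = fmap F g \oc sigm s Y.
Proof.
rewrite /sigm -cA sig_nat cA -[_ \oc cm_inv F _ \oc _]cA cm_inv_nat cA -fmC tcounit_nat.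
by rewrite fmC -!cA.
Qed.

Lemma sigm_cancel (X : D) (Y : C) (a b : Mor X (F (utw TC Y))) :
  sigm s Y \oc a = sigm s Y \oc b -> sigm_at s (utw TC Y) \oc a = sigm_at s (utw TC Y) \oc b.
Proof.
move=> e.
have L : cm F (utw TC Y) \oc fmap F (tcounit_inv TC Y) \oc
         fmap F (tcounit TC Y) \oc cm_inv F (utw TC Y) = idm _.
  by rewrite -[cm F _ \oc _ \oc _]cA -fmC tcounitK fm1 cm1 cmKV.
move/(congr1 (compo (cm F (utw TC Y) \oc fmap F (tcounit_inv TC Y)))): e.
by rewrite /sigm !cA L !c1m.
Qed.

Lemma sigm_a (E : C) :
  cm F E \oc (sigm s (tw TC E) \oc fmap F (tunit TC E)) = sigm_at s E.
Proof.
rewrite /sigm -cA sig_nat cA !cA -[cm F E \oc _ \oc cm_inv F _ \oc _]cA cm_inv_nat cA.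
by rewrite -[cm F E \oc _ \oc fmap F (fmap _ _)]cA -fmC ttriangle fm1 cm1 cmKV c1m.
Qed.
End TF.
Unset Implicit Arguments.
Theorem lemma1p3 (F Ft Fst : ExactCat)
  (T : Twist F) (Tt : Twist Ft) (Tst : Twist Fst)
  (et : TwFunctor T Tt) (est : TwFunctor T Tst) (s : TwNat est)
  (Hii' : cond_ii' et) (Hii'' : cond_ii'' et)
  (HIII : forall (X Y : F) (f : Mor X Y),
      fmap et f = 0 <-> sigm_at s Y \oc fmap est f = 0) :
  exists s0 : forall X Y : F,
      Mor (et X) (utw Tt (et Y)) -> Mor (est X) (est Y),
    (* defining property of s0 *)
    (forall (X Y : F) (p : Mor (et X) (utw Tt (et Y)))
            (X' : F) (q : Mor X' X) (h : Mor X' (utw T Y)),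
        admEpi q -> iotw et Y \oc fmap et h = p \oc fmap et q ->
        s0 X Y p \oc fmap est q = sigm s Y \oc fmap est h) /\
    (* (a) *)
    (forall E : F, cm est E \oc s0 E (tw T E) (idtw et E) = sigm_at s E) /\
    (* (b) *)
    (forall (U X Y V : F) (h : Mor U X) (g : Mor Y V)
            (p : Mor (et X) (utw Tt (et Y))),
        s0 U V (fmap (utw Tt) (fmap et g) \oc p \oc fmap et h)
        = fmap est g \oc s0 X Y p \oc fmap est h) /\
    (* (c) *)
    (forall X Y : F, injective (s0 X Y)) /\
    (* (d) *)
    (forall (X Y : F) (g : Mor (est X) (est Y)),
        ((exists p, s0 X Y p = g) <->
         (exists (X' : F) (q : Mor X' X), admEpi q /\
            divisible s (g \oc fmap est q))) /\
        ((exists p, s0 X Y p = g) <->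
         (exists (Y' : F) (j : Mor Y Y'), admMono j /\
            divisible s (fmap est j \oc g)))).
Proof.
have etE := tfun_exact et. have estE := tfun_exact est.
have SE : forall (X Y : F) (f1 f2 : Mor X (utw T Y)),
   fmap et f1 = fmap et f2 <-> sigm s Y \oc fmap est f1 = sigm s Y \oc fmap est f2.
  move=> X Y f1 f2; split => e.
    have : fmap et (f1 - f2) = 0 by rewrite fmB e subrr.
    move/HIII => H.
    apply/eqP; rewrite -subr_eq0 -cBr -fmB; apply/eqP.
    by rewrite /sigm -cA H !c0r.
  have e' : sigm s Y \oc fmap est (f1 - f2) = sigm s Y \oc 0.
    by rewrite fmB cBr e subrr c0r.
  move/sigm_cancel: e'; rewrite c0r => /HIII.
  by rewrite fmB => /eqP; rewrite subr_eq0 => /eqP.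
have key : forall (X Y : F) (p : Mor (et X) (utw Tt (et Y))), exists g : Mor (est X) (est Y),
   forall (X' : F) (q : Mor X' X) (h : Mor X' (utw T Y)),
     admEpi q -> iotw et Y \oc fmap et h = p \oc fmap et q ->
     g \oc fmap est q = sigm s Y \oc fmap est h.
  move=> X Y p.
  have [j [j1 j2]] := iotw_iso et Y.
  have [X1 [q1 [h1 [Hq1 e1]]]] := Hii' X (utw T Y) (j \oc p).
  have Hq1' := Hq1; case: Hq1' => K [i Hc].
  have : sigm s Y \oc fmap est h1 \oc fmap est i = 0.
    rewrite -cA -fmC.
    have : fmap et (h1 \oc i) = fmap et 0.
      by rewrite fmC -e1 -cA -fmC (conf_zero Hc) !fm0 c0r.
    by move/SE; rewrite fm0 c0r.
  move/(coker_fact (estE _ _ _ _ _ Hc)) => [g Hg].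
  exists g => X' q h Hq e.
  have [B' [p' [f' [ep Hp']]]] := @pullback_epi _ _ _ _ q1 q Hq1.
  apply: (epi_cancel (exact_epi estE Hp')).
  rewrite -(cA g) -fmC -ep fmC cA Hg -!(cA (sigm s Y)) -!fmC.
  apply: (SE _ _ _ _).1.
  have eh : fmap et h = j \oc p \oc fmap et q by rewrite -cA -e cA j1 c1m.
  by rewrite !fmC -e1 eh -!cA -!fmC ep.
pose s0 := fun X Y p => proj1_sig (constructive_indefinite_description _ (key X Y p)).
have s0P : forall (X Y : F) (p : Mor (et X) (utw Tt (et Y))) (X' : F) (q : Mor X' X) (h : Mor X' (utw T Y)), admEpi q -> iotw et Y \oc fmap et h = p \oc fmap et q ->
    s0 X Y p \oc fmap est q = sigm s Y \oc fmap est h.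
  move=> X Y p; exact: (proj2_sig (constructive_indefinite_description _ (key X Y p))).
have rep : forall (X Y : F) (p : Mor (et X) (utw Tt (et Y))), exists (X' : F) (q : Mor X' X) (h : Mor X' (utw T Y)),
    admEpi q /\ iotw et Y \oc fmap et h = p \oc fmap et q.
  move=> X Y p.
  have [j [j1 j2]] := iotw_iso et Y.
  have [X1 [q1 [h1 [Hq1 e1]]]] := Hii' X (utw T Y) (j \oc p).
  exists X1, q1, h1; split => //.
  by rewrite -e1 !cA j2 c1m.
clearbody s0.
have Hb : forall (U X Y V : F) (h : Mor U X) (g : Mor Y V)
            (p : Mor (et X) (utw Tt (et Y))),
        s0 U V (fmap (utw Tt) (fmap et g) \oc p \oc fmap et h)
        = fmap est g \oc s0 X Y p \oc fmap est h.
  move=> U X Y V h g p.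
  have [X' [q [h1 [Hq e1]]]] := rep X Y p.
  have [U' [q' [h' [ep Hq']]]] := @pullback_epi _ _ _ _ q h Hq.
  apply: (epi_cancel (exact_epi estE Hq')).
  rewrite (s0P _ _ _ _ _ (fmap (utw T) g \oc h1 \oc h') Hq').
    rewrite -(cA (fmap est g \oc s0 X Y p)) -(fmC est h) -ep (fmC est q) cA -(cA (fmap est g)) (s0P _ _ _ _ _ _ Hq e1).
    by rewrite !fmC 2!(cA (sigm s V)) sigm_nat (cA (fmap est g)).
  rewrite !fmC !(cA (iotw et V)) iotw_nat -(cA _ (iotw et Y)) e1.
  by rewrite -!cA -!fmC ep.
exists s0; split; first exact: s0P.
split.
  move=> E.
  have := s0P E (tw T E) (idtw et E) E (idm E) (tunit T E) (admEpi_id E).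
  by rewrite idtw_eq !fm1 !cm1 => /(_ erefl) ->; rewrite sigm_a.
split; first exact: Hb.
split.
  move=> X Y p1 p2 e.
  have [X1 [q1 [h1 [Hq1 e1]]]] := rep X Y p1.
  have [j [j1 j2]] := iotw_iso et Y.
  have [X2 [q2 [h2 [Hq2 e2]]]] := Hii' X1 (utw T Y) (j \oc p2 \oc fmap et q1).
  have Hq := admEpi_comp Hq2 Hq1.
  have a1 : iotw et Y \oc fmap et (h1 \oc q2) = p1 \oc fmap et (q1 \oc q2).
    by rewrite !fmC cA e1 cA.
  have a2 : iotw et Y \oc fmap et h2 = p2 \oc fmap et (q1 \oc q2).
    by rewrite -e2 !cA j2 c1m fmC cA.
  have E1 := s0P _ _ p1 _ (q1 \oc q2) (h1 \oc q2) Hq a1.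
  have E2 := s0P _ _ p2 _ (q1 \oc q2) h2 Hq a2.
  rewrite e E2 in E1.
  move/SE: E1 => E3.
  apply: (epi_cancel (exact_epi etE Hq)).
  by rewrite -a1 -a2 E3.
move=> X Y g; split; split.
- case=> p <-.
  have [X' [q [h [Hq e]]]] := rep X Y p.
  by exists X', q; split => //; exists h; exact: s0P.
- case=> X' [q [Hq [h e]]].
  have Hq' := Hq; case: Hq' => K [i Hc].
  have z : fmap et h \oc fmap et i = 0.
    rewrite -fmC -(fm0 et).
    apply: (SE _ _ _ _).2.
    by rewrite fm0 c0r fmC cA -e -cA -fmC (conf_zero Hc) fm0 c0r.
  have [p0 Hp0] := coker_fact (etE _ _ _ _ _ Hc)
        (f := iotw et Y \oc fmap et h) ltac:(by rewrite -cA z c0r).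
  exists p0; apply: (epi_cancel (exact_epi estE Hq)).
  by rewrite e; apply: s0P => //; rewrite Hp0.
- case=> p <-.
  have [j [j1 j2]] := iotw_iso et Y.
  have [Z [j0 [h0 [Hj0 e0]]]] := Hii'' X (utw T Y) (j \oc p).
  exists (tw T Z), (fmap (tw T) j0 \oc tcounit_inv T Y); split.
    have M1 := exact_mono (tw_exact T) Hj0.
    apply: (admMono_comp _ M1).
    apply: admMono_iso; exists (tcounit T Y); split; [exact: tcounitKV | exact: tcounitK].
  exists (tunit T Z \oc h0).
  set jj := fmap (tw T) j0 \oc tcounit_inv T Y.
  have K1 : tunit T Z \oc j0 = fmap (utw T) jj by rewrite /jj fmC -tunit_utw tunit_nat.
  have side : iotw et (tw T Z) \oc fmap et (tunit T Z \oc h0)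
              = fmap (utw Tt) (fmap et jj) \oc p \oc fmap et (idm X).
    rewrite fm1 cm1 -[p]c1m -j2 (cA _ (iotw et Y \oc j)) (cA _ (iotw et Y)) -iotw_nat -K1.
    rewrite -(cA (iotw et (tw T Z) \oc _) j p) -(cA (iotw et (tw T Z))) !fmC -e0.
    by rewrite (cA (fmap et (tunit T Z))).
  have := s0P _ _ _ X (idm X) _ (admEpi_id X) side.
  rewrite fm1 cm1 => <-.
  by rewrite -[fmap est jj \oc s0 X Y p]cm1 -(fm1 est X) -Hb fm1 cm1.
- case=> Y' [jm [Hj [h e]]].
  have Hj' := Hj; case: Hj' => Z [c Hc].
  have Hc2 := etE _ _ _ _ _ (utw_exact T Hc).
  have z : fmap et (fmap (utw T) c) \oc fmap et h = 0.
    rewrite -fmC -(fm0 et); apply: (SE _ _ _ _).2.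
    rewrite fm0 c0r fmC (cA (sigm s Z)) sigm_nat -(cA (fmap est c)) -e cA -fmC.
    by rewrite (conf_zero Hc) fm0 c0l.
  have [k Hk] := ker_fact Hc2 z.
  exists (iotw et Y \oc k).
  apply: (mono_cancel (exact_mono estE Hj)).
  have side : iotw et Y' \oc fmap et h
      = fmap (utw Tt) (fmap et jm) \oc (iotw et Y \oc k) \oc fmap et (idm X).
    by rewrite fm1 cm1 (cA _ (iotw et Y)) -iotw_nat -(cA (iotw et Y')) Hk.
  have := s0P _ _ _ X (idm X) _ (admEpi_id X) side.
  rewrite fm1 cm1 => H.
  by rewrite e -[fmap est jm \oc _]cm1 -(fm1 est X) -Hb fm1 cm1 H.
Qed.
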